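(* Let $p\in[1,\infty)\setminus\{2\}$, let $(X,\mathcal{B},\mu)$ and $(Y,\mathcal{C},\nu)$ be $\sigma$-finite measure spaces, and let $\lambda\mapsto s_\lambda\in L(L^p(X,\mu),L^p(Y,\nu))$, $\lambda\in[0,1]$, be a norm continuous path of surjective isometries. Let $S_\lambda$ be the spatial realization of $s_\lambda$. Then $S_0=S_1$.
   Context: By Lamperti's theorem (cited), for $p\ne2$ every surjective isometry $s$ between such $L^p$ spaces is a spatial isometry: there are a bijective measurable set transformation $S\colon\mathcal{B}/\mathcal{N}(\mu)\to\mathcal{C}/\mathcal{N}(\nu)$ (a Boolean algebra homomorphism preserving countable unions, $\mathcal{N}$ denoting null sets) and a measurable $g$ with $|g|=1$ a.e. such that $s\xi=g\,[dS_*(\mu)/d\nu]^{1/p}S_*(\xi)$, where $S_*$ is the induced linear map on measurable functions with $S_*(\chi_E)=\chi_{S(E)}$ preserving a.e. limits, and $S_*(\mu)(F)=\mu(E)$ when $S([E])=[F]$. This $S$ is uniquely determined by $s$ and is called its spatial realization. *)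

(* Defs.v *)
From HB Require Import structures.
From mathcomp Require Import all_boot all_order all_algebra.
From mathcomp Require Import all_classical all_reals all_analysis.
From mathcomp Require complex.
Import complex.ComplexField.
Set Implicit Arguments. Unset Strict Implicit. Unset Printing Implicit Defensive.
Import Order.TTheory GRing.Theory Num.Theory.
Import numFieldNormedType.Exports.
Local Open Scope classical_set_scope.
Local Open Scope ring_scope.

Notation Cx R := (complex.complex R).

Section Lp.
Context {R : realType}.

Definition cabs (z : Cx R) : R := complex.ComplexField.Normc.normc z.

Definition real_cx (x : R) : Cx R := complex.Complex x 0.

Definition cmeasurable d (T : measurableType d) (f : T -> Cx R) :=
  measurable_fun setT (fun x => complex.Re (f x)) /\
  measurable_fun setT (fun x => complex.Im (f x)).

Definition pint d (T : measurableType d) (m : {measure set T -> \bar R})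
  (p : R) (f : T -> Cx R) : \bar R :=
  (\int[m]_x ((cabs (f x)) `^ p)%:E)%E.

(* f is (a representative of an element) of L^p(T, m) *)
Definition inLp d (T : measurableType d) (m : {measure set T -> \bar R})
  (p : R) (f : T -> Cx R) : Prop :=
  cmeasurable f /\ (pint m p f < +oo)%E.

Definition lpnorm d (T : measurableType d) (m : {measure set T -> \bar R})
  (p : R) (f : T -> Cx R) : R := (fine (pint m p f)) `^ p^-1.

(* a.e. equality, i.e. equality in L^p *)
Definition aeeq d (T : measurableType d) (m : {measure set T -> \bar R})
  (f g : T -> Cx R) : Prop := {ae m, forall x, f x = g x}.

(* s acts on representatives and defines a bounded linear operator
   L^p(X,mu) -> L^p(Y,nu) which is an isometry onto L^p(Y,nu) *)
Definition surj_isometry d1 d2 (X : measurableType d1) (Y : measurableType d2)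
  (mu : {measure set X -> \bar R}) (nu : {measure set Y -> \bar R}) (p : R)
  (s : (X -> Cx R) -> (Y -> Cx R)) : Prop :=
  [/\ (forall f, inLp mu p f -> inLp nu p (s f)),
      (forall f g, inLp mu p f -> inLp mu p g -> aeeq mu f g ->
         aeeq nu (s f) (s g)),
      (forall (a : Cx R) f g, inLp mu p f -> inLp mu p g ->
         aeeq nu (s (fun x => a * f x + g x)) (fun y => a * s f y + s g y)),
      (forall f, inLp mu p f -> lpnorm nu p (s f) = lpnorm mu p f) &
      (forall h, inLp nu p h -> exists2 f, inLp mu p f & aeeq nu (s f) h)].

Definition norm_continuous_path d1 d2 (X : measurableType d1)
  (Y : measurableType d2)
  (mu : {measure set X -> \bar R}) (nu : {measure set Y -> \bar R}) (p : R)
  (s : R -> (X -> Cx R) -> (Y -> Cx R)) : Prop :=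
  forall l, 0 <= l <= 1 -> forall e : R, 0 < e -> exists2 delta : R, 0 < delta &
    forall l', 0 <= l' <= 1 -> `|l - l'| < delta ->
      forall f, inLp mu p f ->
        lpnorm nu p (fun y => s l f y - s l' f y) <= e * lpnorm mu p f.

(* symmetric difference of E and F is m-null: [E] = [F] in B/N(m) *)
Definition nulleq d (T : measurableType d) (m : {measure set T -> \bar R})
  (E F : set T) : Prop := m ((E `\` F) `|` (F `\` E)) = 0%E.

(* S_*(xi) = eta: for every Borel set B of reals,
   [eta^{-1}(B)] = S([xi^{-1}(B)]) (for real and imaginary parts) *)
Definition induced_map d1 d2 (X : measurableType d1) (Y : measurableType d2)
  (nu : {measure set Y -> \bar R}) (S : set X -> set Y)
  (xi : X -> Cx R) (eta : Y -> Cx R) : Prop :=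
  cmeasurable eta /\
  forall B : set R, measurable B ->
    nulleq nu ((fun y => complex.Re (eta y)) @^-1` B)
              (S ((fun x => complex.Re (xi x)) @^-1` B)) /\
    nulleq nu ((fun y => complex.Im (eta y)) @^-1` B)
              (S ((fun x => complex.Im (xi x)) @^-1` B)).

(* S (acting on representatives of B/N(mu)) is the spatial realization of s:
   a bijective measurable set transformation B/N(mu) -> C/N(nu) with
   s xi = g (dS_*(mu)/dnu)^{1/p} S_*(xi). *)
Definition spatial_realization d1 d2 (X : measurableType d1)
  (Y : measurableType d2)
  (mu : {measure set X -> \bar R}) (nu : {measure set Y -> \bar R}) (p : R)
  (s : (X -> Cx R) -> (Y -> Cx R)) (S : set X -> set Y) : Prop :=
  [/\ (forall E, measurable E -> measurable (S E)),
      [/\ (forall E E', measurable E -> measurable E' ->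
         nulleq mu E E' -> nulleq nu (S E) (S E')),
      (forall E E', measurable E -> measurable E' ->
         nulleq nu (S E) (S E') -> nulleq mu E E') &
      (forall F, measurable F -> exists2 E, measurable E & nulleq nu (S E) F)],
      ((forall E, measurable E -> nulleq nu (S (~` E)) (~` S E)) /\
      (forall E : nat -> set X, (forall n, measurable (E n)) ->
         nulleq nu (S (\bigcup_n E n)) (\bigcup_n S (E n)))) &
      exists g : Y -> Cx R, exists h : Y -> R,
        [/\ cmeasurable g, {ae nu, forall y, cabs (g y) = 1},
            (measurable_fun setT h /\ forall y, 0 <= h y),
            (* h = dS_*(mu)/dnu, where S_*(mu)(S E) = mu E *)
            (forall E, measurable E ->
               (\int[nu]_(y in S E) (h y)%:E)%E = mu E) &
            (forall xi, inLp mu p xi -> exists2 eta, induced_map nu S xi eta &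
               aeeq nu (s xi)
                 (fun y => g y * real_cx (h y `^ p^-1) * eta y))]].

End Lp.

(* Main.v *)
Require Import Defs.
From mathcomp Require Import all_boot all_order all_algebra.
From mathcomp Require Import all_classical all_reals all_analysis.
From mathcomp Require complex.
Import complex.ComplexField.
From mathcomp Require Import measurable_realfun lra.
Import Order.TTheory GRing.Theory Num.Theory.
Local Open Scope classical_set_scope.
Local Open Scope ring_scope.
Set Implicit Arguments.

Lemma ae_impl (R : realType) (d : measure_display) (T : measurableType d)
  (m : {measure set T -> \bar R}) (P Q : T -> Prop) :
  {ae m, forall y, P y} -> (forall y, P y -> Q y) -> {ae m, forall y, Q y}.
Proof.
move=> [N [mN N0 HN]] PQ; exists N; split => // y /= nQ; apply: HN => /= Py.
by apply: nQ; apply: PQ.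
Qed.
Arguments ae_impl {R d T m P Q}.


Lemma ae_and (R : realType) (d : measure_display) (T : measurableType d)
  (m : {measure set T -> \bar R}) (P Q : T -> Prop) :
  {ae m, forall y, P y} -> {ae m, forall y, Q y} -> {ae m, forall y, P y /\ Q y}.
Proof.
move=> HP HQ; have := negligibleU HP HQ; apply: negligibleS => y /= H.
by apply/not_andP.
Qed.
Arguments ae_and {R d T m P Q}.


Lemma ae_true (R : realType) (d : measure_display) (T : measurableType d)
  (m : {measure set T -> \bar R}) (P : T -> Prop) :
  (forall y, P y) -> {ae m, forall y, P y}.
Proof.
move=> HP; exists set0; split => //.
by move=> y /= /(_ (HP y)).
Qed.
Arguments ae_true {R d T m P}.


Lemma ae_count (R : realType) (d : measure_display) (T : measurableType d)
  (m : {measure set T -> \bar R}) (P : nat -> T -> Prop) :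
  (forall n, {ae m, forall y, P n y}) -> {ae m, forall y, forall n, P n y}.
Proof.
move=> HP; have := negligible_bigcup HP; apply: negligibleS => y /= H.
apply: contrapT => H2; apply: H => n; apply: contrapT => Hn; apply: H2; by exists n.
Qed.
Arguments ae_count {R d T m P}.


Lemma nulleqP (R : realType) (d : measure_display) (T : measurableType d)
  (m : {measure set T -> \bar R}) (A B : set T) :
  measurable A -> measurable B ->
  nulleq m A B <-> {ae m, forall y, A y <-> B y}.
Proof.
move=> mA mB; rewrite /nulleq; split.
- move=> H0; exists ((A `\` B) `|` (B `\` A)); split => //.
    by apply: measurableU; apply: measurableD.
  move=> y /= H; case: (pselect (A y)) => Ay; case: (pselect (B y)) => By.
  + by exfalso; apply: H; split.
  + by left.
  + by right.
  + by exfalso; apply: H; split.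
- move=> [N [mN N0 HN]]; apply/eqP; rewrite eq_le measure_ge0 andbT -N0.
  apply: le_measure; rewrite ?inE //.
    by apply: measurableU; apply: measurableD.
  move=> y [[Ay nBy]|[By nAy]]; apply: HN => /=; move=> [H1 H2].
    by apply: nBy; apply: H1.
  by apply: nAy; apply: H2.
Qed.
Arguments nulleqP {R d T m A B}.



Lemma sr_meas (R : realType) d1 d2 (X : measurableType d1) (Y : measurableType d2)
  (mu : {measure set X -> \bar R}) (nu : {measure set Y -> \bar R}) p s S :
  spatial_realization mu nu p s S -> forall E, measurable E -> measurable (S E).
Proof. by case. Qed.

Lemma sr_C (R : realType) d1 d2 (X : measurableType d1) (Y : measurableType d2)
  (mu : {measure set X -> \bar R}) (nu : {measure set Y -> \bar R}) p s S :
  spatial_realization mu nu p s S -> forall E, measurable E ->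
  {ae nu, forall y, S (~` E) y <-> ~ S E y}.
Proof.
move=> HS E mE; case: (HS) => Sm _ [Sc _] _.
by have := Sc E mE; rewrite (nulleqP (Sm _ (measurableC mE)) (measurableC (Sm _ mE))).
Qed.

Lemma sr_count (R : realType) d1 d2 (X : measurableType d1) (Y : measurableType d2)
  (mu : {measure set X -> \bar R}) (nu : {measure set Y -> \bar R}) p s S :
  spatial_realization mu nu p s S -> forall E : nat -> set X, (forall n, measurable (E n)) ->
  {ae nu, forall y, S (\bigcup_n E n) y <-> exists n, S (E n) y}.
Proof.
move=> HS E mE; case: (HS) => Sm _ [_ Su] _.
have := Su E mE; rewrite nulleqP //.

- move/ae_impl; apply => y [H1 H2]; split.
    by move=> /H1 [n _ Hn]; exists n.
  by move=> [n Hn]; apply: H2; exists n.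
- by apply: Sm; apply: bigcup_measurable => n _.
- by apply: bigcup_measurable => n _; apply: Sm.
Qed.

Lemma sr_U2 (R : realType) d1 d2 (X : measurableType d1) (Y : measurableType d2)
  (mu : {measure set X -> \bar R}) (nu : {measure set Y -> \bar R}) p s S :
  spatial_realization mu nu p s S -> forall E1 E2, measurable E1 -> measurable E2 ->
  {ae nu, forall y, S (E1 `|` E2) y <-> S E1 y \/ S E2 y}.
Proof.
move=> HS E1 E2 m1 m2.
pose F n := if n == 0%N then E1 else E2.
have mF : forall n, measurable (F n) by move=> [|n].
have eF : \bigcup_n F n = E1 `|` E2.
  apply/seteqP; split => x.
    by move=> [[|n] _ H]; [left|right].
  by move=> [H|H]; [exists 0%N | exists 1%N].
have := sr_count HS F mF; rewrite eF; move/ae_impl; apply => y [H1 H2]; split.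
  by move=> /H1 [[|n] Hn]; [left|right].
by move=> [H|H]; apply: H2; [exists 0%N | exists 1%N].
Qed.

Lemma sr_0 (R : realType) d1 d2 (X : measurableType d1) (Y : measurableType d2)
  (mu : {measure set X -> \bar R}) (nu : {measure set Y -> \bar R}) p s S :
  spatial_realization mu nu p s S -> {ae nu, forall y, ~ S set0 y}.
Proof.
move=> HS.
have := ae_and (sr_U2 HS _ _ measurable0 measurableT) (sr_C HS _ measurableT).
rewrite set0U setCT; move/ae_impl; apply => y [H1 H2] H0.
by apply: (proj1 H2 H0); apply: (proj2 H1); left.
Qed.

Lemma sr_mono (R : realType) d1 d2 (X : measurableType d1) (Y : measurableType d2)
  (mu : {measure set X -> \bar R}) (nu : {measure set Y -> \bar R}) p s S :
  spatial_realization mu nu p s S -> forall E1 E2, measurable E1 -> measurable E2 ->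
  E1 `<=` E2 -> {ae nu, forall y, S E1 y -> S E2 y}.
Proof.
move=> HS E1 E2 m1 m2 sub; have := sr_U2 HS _ _ m1 m2.
have -> : E1 `|` E2 = E2 by apply/setUidPr.
move/ae_impl; apply => y [_ H] H1; apply: H; by left.
Qed.

Lemma sr_T (R : realType) d1 d2 (X : measurableType d1) (Y : measurableType d2)
  (mu : {measure set X -> \bar R}) (nu : {measure set Y -> \bar R}) p s S :
  spatial_realization mu nu p s S -> {ae nu, forall y, S setT y}.
Proof.
move=> HS; case: (HS) => Sm [_ _ Ss] _ _.
have [E0 mE0] := Ss setT measurableT.
rewrite nulleqP //; last exact: Sm.
move=> H; have := ae_and H (sr_mono HS mE0 measurableT (@subsetT _ E0)).
by move/ae_impl; apply => y [[_ H2] H3]; apply: H3; apply: H2.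
Qed.

Lemma sr_null (R : realType) d1 d2 (X : measurableType d1) (Y : measurableType d2)
  (mu : {measure set X -> \bar R}) (nu : {measure set Y -> \bar R}) p s S :
  spatial_realization mu nu p s S -> forall E, measurable E -> mu E = 0%E ->
  {ae nu, forall y, ~ S E y}.
Proof.
move=> HS E mE E0; case: (HS) => Sm [Si _ _] _ _.
have : nulleq mu E set0 by rewrite /nulleq setD0 set0D setU0.
move=> /(Si _ _ mE measurable0); rewrite nulleqP; [|exact: Sm|exact: Sm].
move=> H; have := ae_and H (sr_0 HS).
by move/ae_impl; apply => y [[H1 _] H2] /H1.
Qed.

Lemma cabsE (R : realType) (z : Cx R) :
  cabs z = Num.sqrt (complex.Re z ^+ 2 + complex.Im z ^+ 2).
Proof. by case: z. Qed.

Lemma cabs_real (R : realType) (r : R) : cabs (real_cx r) = `|r|.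
Proof. by rewrite cabsE /= expr0n /= addr0 sqrtr_sqr. Qed.

Lemma cabsN (R : realType) (z : Cx R) : cabs (- z) = cabs z.
Proof. by case: z => a b; rewrite !cabsE /= !sqrrN. Qed.

Lemma cabs0 (R : realType) : cabs (0 : Cx R) = 0.
Proof. by rewrite cabsE /= expr0n /= addr0 sqrtr0. Qed.

Lemma cabs_meas (R : realType) d (T : measurableType d) (u : T -> Cx R) (p : R) :
  cmeasurable u -> measurable_fun setT (fun y => (cabs (u y)) `^ p).
Proof.
move=> [hRe hIm].
have -> : (fun y => (cabs (u y)) `^ p) =
  (fun x => x `^ p) \o (Num.sqrt \o (fun y => complex.Re (u y) ^+ 2 + complex.Im (u y) ^+ 2)).
  by apply: funext => y /=; rewrite cabsE.
apply: measurableT_comp; first exact: measurable_powR.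
apply: measurableT_comp; first exact: continuous_measurable_fun (@sqrt_continuous R).
by apply: measurable_funD; apply: measurable_funX.
Qed.

Lemma cabs_emeas (R : realType) d (T : measurableType d) (u : T -> Cx R) (p : R) :
  cmeasurable u -> measurable_fun setT (fun y => ((cabs (u y)) `^ p)%:E).
Proof. by move=> hu; apply/measurable_EFinP; apply: cabs_meas. Qed.

Definition chi (R : realType) (T : Type) (E : set T) : T -> Cx R :=
  fun x => real_cx (\1_E x).

Lemma pint_chi (R : realType) d (T : measurableType d) (m : {measure set T -> \bar R})
  (p : R) (E : set T) : p != 0 -> measurable E -> pint m p (chi R E) = m E.
Proof.
move=> p0 mE; rewrite /pint.
have -> : (fun x => ((cabs (chi R E x)) `^ p)%:E) = (fun x => (\1_E x)%:E).
  apply: funext => x; rewrite /chi cabs_real indicE.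
  by case: (x \in E); rewrite /= ?normr1 ?normr0 ?powR1 ?powR0.
by rewrite integral_indic // setIT.
Qed.

Lemma chi_inLp (R : realType) d (T : measurableType d) (m : {measure set T -> \bar R})
  (p : R) (E : set T) : p != 0 -> measurable E -> (m E < +oo)%E -> inLp m p (chi R E).
Proof.
move=> p0 mE mEfin; split; last by rewrite pint_chi.
split => /=.
  exact: measurable_indic.
exact: measurable_cst.
Qed.

Lemma sr_zero (R : realType) d1 d2 (X : measurableType d1) (Y : measurableType d2)
  (mu : {measure set X -> \bar R}) (nu : {measure set Y -> \bar R}) p s S :
  spatial_realization mu nu p s S -> p != 0 ->
  forall E, measurable E -> (mu E < +oo)%E ->
  {ae nu, forall y, ~ S E y -> s (chi R E) y = 0}.
Proof.
move=> HS p0 E mE mEfin; case: (HS) => Sm _ _ [g [h [_ _ _ _ Hind]]].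
have [eta [[cRe cIm] Hpre] Hae] := Hind (chi R E) (chi_inLp mu p E p0 mE mEfin).
have [HRe HIm] := Hpre [set 0] (measurable_set1 0).
have eRe : (fun x => complex.Re (chi R E x)) @^-1` [set 0] = ~` E.
  apply/seteqP; split => x /=; rewrite /chi /= indicE.
    by move=> H Ex; move: H; rewrite mem_set //= => /eqP; rewrite oner_eq0.
  by move=> nE; rewrite memNset.
have eIm : (fun x => complex.Im (chi R E x)) @^-1` [set 0] = setT.
  by apply/seteqP; split => x //=.
rewrite eRe in HRe; rewrite eIm in HIm.
have mRe : measurable ((fun y => complex.Re (eta y)) @^-1` [set 0]).
  by rewrite -(setTI (_ @^-1` _)); apply: cRe => //; exact: measurable_set1.
have mIm : measurable ((fun y => complex.Im (eta y)) @^-1` [set 0]).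
  by rewrite -(setTI (_ @^-1` _)); apply: cIm => //; exact: measurable_set1.
move: HRe; rewrite nulleqP //; last by apply: Sm; apply: measurableC.
move: HIm; rewrite nulleqP //; last by apply: Sm.
move=> HIm' HRe'.
have := ae_and (ae_and HIm' HRe') (ae_and (sr_C HS _ mE) (ae_and (sr_T HS) Hae)).
move/ae_impl; apply => y [[[_ H1] [_ H2]] [[_ H3] [H4 H5]]] nS.
rewrite H5.
have -> : eta y = 0.
  have -> : eta y = complex.Complex (complex.Re (eta y)) (complex.Im (eta y)) by case: (eta y).
  by rewrite (H1 H4) (H2 (H3 nS)).
by rewrite mulr0.
Qed.

Lemma pint_ge0 (R : realType) d (T : measurableType d) (m : {measure set T -> \bar R})
  (p : R) f : (0 <= pint m p f)%E.
Proof. by apply: integral_ge0 => x _; rewrite lee_fin powR_ge0. Qed.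

Lemma pint_disj (R : realType) d (T : measurableType d) (m : {measure set T -> \bar R})
  (p : R) (u v : T -> Cx R) : p != 0 -> cmeasurable u -> cmeasurable v ->
  {ae m, forall y, u y = 0 \/ v y = 0} ->
  pint m p (fun y => u y - v y) = (pint m p u + pint m p v)%E.
Proof.
move=> p0 cu cv Hd; rewrite /pint -ge0_integralD //; last first.
- exact: cabs_emeas.
- by move=> x _; rewrite lee_fin powR_ge0.
- exact: cabs_emeas.
- by move=> x _; rewrite lee_fin powR_ge0.
apply: ae_eq_integral => //.
- apply: cabs_emeas; case: cu => cu1 cu2; case: cv => cv1 cv2; split.
    have -> : (fun x => complex.Re (u x - v x)) = (fun x => complex.Re (u x) - complex.Re (v x)).
      by apply: funext => x; case: (u x); case: (v x).
    exact: measurable_funB.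
  have -> : (fun x => complex.Im (u x - v x)) = (fun x => complex.Im (u x) - complex.Im (v x)).
    by apply: funext => x; case: (u x); case: (v x).
  exact: measurable_funB.
- by apply: emeasurable_funD; exact: cabs_emeas.
- move: Hd; move/ae_impl; apply => y [->|->] _.
    by rewrite sub0r cabsN cabs0 powR0 // add0e.
  by rewrite subr0 cabs0 powR0 // adde0.
Qed.

Lemma lpnorm_disj (R : realType) d (T : measurableType d) (m : {measure set T -> \bar R})
  (p : R) (u v : T -> Cx R) : 0 < p -> inLp m p u -> inLp m p v ->
  {ae m, forall y, u y = 0 \/ v y = 0} ->
  lpnorm m p u <= lpnorm m p (fun y => u y - v y).
Proof.
move=> p0 [cu fu] [cv fv] Hd; rewrite /lpnorm pint_disj //; last by rewrite gt_eqF.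
have fnu : pint m p u \is a fin_num by rewrite ge0_fin_numE // pint_ge0.
have fnv : pint m p v \is a fin_num by rewrite ge0_fin_numE // pint_ge0.
rewrite (fineD fnu fnv); apply: (@ge0_ler_powR _ p^-1).
- by rewrite invr_ge0 ltW.
- by rewrite nnegrE fine_ge0 // pint_ge0.
- by rewrite nnegrE addr_ge0 // fine_ge0 // pint_ge0.
- by rewrite lerDl fine_ge0 // pint_ge0.
Qed.

Lemma ae_not_null (R : realType) d (T : measurableType d) (m : {measure set T -> \bar R})
  (F : set T) : measurable F -> {ae m, forall y, ~ F y} -> m F = 0%E.
Proof.
move=> mF [N [mN N0 HN]]; apply/eqP; rewrite eq_le measure_ge0 andbT -N0.
apply: le_measure; rewrite ?inE // => y Fy; apply: HN => /=; by apply.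
Qed.

Lemma core (R : realType) d1 d2 (X : measurableType d1) (Y : measurableType d2)
  (mu : {measure set X -> \bar R}) (nu : {measure set Y -> \bar R}) (p : R) sa sb Sa Sb :
  0 < p -> sigma_finite setT mu ->
  surj_isometry mu nu p sa -> surj_isometry mu nu p sb ->
  spatial_realization mu nu p sa Sa -> spatial_realization mu nu p sb Sb ->
  (forall f, inLp mu p f ->
     lpnorm nu p (fun y => sa f y - sb f y) <= 2^-1 * lpnorm mu p f) ->
  forall E, measurable E -> nu (Sa E `\` Sb E) = 0%E.
Proof.
move=> p0 [A AT mA] Ha Hbb HSa HSb Hb E mE.
have pn0 : p != 0 by rewrite gt_eqF.
have mSa := sr_meas HSa; have mSb := sr_meas HSb.
set F := Sa E `\` Sb E.
have mF : measurable F by apply: measurableD; [apply: mSa | apply: mSb].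
apply: contrapT => FN.
case: (HSa) => _ [_ _ Ss] _ _.
have [E0 mE0] := Ss F mF; rewrite nulleqP //; last exact: mSa.
move=> HE0.
pose G n := E0 `&` E `&` A n.
have mG : forall n, measurable (G n).
  by move=> n; apply: measurableI; [apply: measurableI|case: (mA n)].
have [n Hn] : exists n, ~ {ae nu, forall y, ~ Sa (G n) y}.
  apply/existsNP => Hall; apply: FN; apply: ae_not_null => //.
  have eG : \bigcup_n G n = E0 `&` E.
    apply/seteqP; split => x.
      by move=> [k _ [[H1 H2] _]].
    move=> [H1 H2]; have : setT x by [].
    by rewrite AT => -[k _ Hk]; exists k.
  have eE0 : E0 = (E0 `&` E) `|` (E0 `&` ~` E).
    by rewrite -setIUr setUv setIT.
  have m1 : measurable (E0 `&` E) by apply: measurableI.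
  have m2 : measurable (E0 `&` ~` E) by apply: measurableI => //; apply: measurableC.
  have H1 := ae_count Hall.
  have H2 := sr_count HSa G mG; rewrite eG in H2.
  have H3 := sr_U2 HSa _ _ m1 m2; rewrite -eE0 in H3.
  have H4 := sr_mono HSa m2 (measurableC mE) (@subIsetr _ _ _).
  have H5 := sr_C HSa _ mE.
  have := ae_and HE0 (ae_and H1 (ae_and H2 (ae_and H3 (ae_and H4 H5)))).
  move/ae_impl; apply => y [[_ HF] [HG [[HG2 _] [[HU _] [HM [HC _]]]]]] Fy.
  have := Fy; move=> [SaE _].
  case: (HU (HF Fy)) => [/HG2 [k Hk]|/HM /HC //].
  exact: (HG k).
set E' := G n.
have mE' : measurable E' := mG n.
have fin' : (mu E' < +oo)%E.
  case: (mA n) => mAn fAn; apply: le_lt_trans fAn.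
  by apply: le_measure; rewrite ?inE // => x [].
have pos' : (0 < mu E')%E.
  rewrite lt_neqAle measure_ge0 andbT; apply/eqP => H0; apply: Hn.
  by apply: (sr_null HSa _ mE'); rewrite H0.
have Hz1 := sr_zero HSa pn0 _ mE' fin'.
have Hz2 := sr_zero HSb pn0 _ mE' fin'.
have Hm1 := sr_mono HSa mE' mE0 (fun x (H : G n x) => H.1.1).
have Hm2 := sr_mono HSb mE' mE (fun x (H : G n x) => H.1.2).
have Hd : {ae nu, forall y, sa (chi R E') y = 0 \/ sb (chi R E') y = 0}.
  have := ae_and (ae_and Hz1 Hz2) (ae_and (ae_and Hm1 Hm2) HE0).
  move/ae_impl; apply => y [[Z1 Z2] [[M1 M2] [HF _]]].
  case: (pselect (Sa E' y)) => [/M1 /HF [_ nSb]|nS]; last by left; apply: Z1.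
  by right; apply: Z2 => /M2.
have iL := chi_inLp mu p E' pn0 mE' fin'.
case: Ha => Hin _ _ Hiso _; case: Hbb => Hin' _ _ _ _.
have := lpnorm_disj p0 (Hin _ iL) (Hin' _ iL) Hd.
rewrite Hiso //.
have := Hb _ iL.
have : 0 < lpnorm mu p (chi R E').
  rewrite /lpnorm pint_chi //; apply: powR_gt0; apply: fine_gt0.
  by rewrite pos' fin'.
lra.
Qed.

Lemma lpnorm_sym (R : realType) d (T : measurableType d) (m : {measure set T -> \bar R})
  (p : R) (u v : T -> Cx R) :
  lpnorm m p (fun y => u y - v y) = lpnorm m p (fun y => v y - u y).
Proof.
rewrite /lpnorm /pint; congr (fine _ `^ _); apply: eq_integral => y _.
by rewrite -cabsN opprB.
Qed.

Lemma nulleq_trans (R : realType) d (T : measurableType d) (m : {measure set T -> \bar R})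
  (A B C : set T) : measurable A -> measurable B -> measurable C ->
  nulleq m A B -> nulleq m B C -> nulleq m A C.
Proof.
move=> mA mB mC; rewrite !nulleqP // => H1 H2.
by have := ae_and H1 H2; move/ae_impl; apply => y [[? ?] [? ?]]; split; auto.
Qed.

Lemma nulleq_sym (R : realType) d (T : measurableType d) (m : {measure set T -> \bar R})
  (A B : set T) : measurable A -> measurable B ->
  nulleq m A B -> nulleq m B A.
Proof.
move=> mA mB; rewrite !nulleqP // => H1.
by move: H1; move/ae_impl; apply => y [? ?]; split.
Qed.

Lemma stepK (R : realType) d1 d2 (X : measurableType d1) (Y : measurableType d2)
  (mu : {measure set X -> \bar R}) (nu : {measure set Y -> \bar R}) (p : R) sa sb Sa Sb :
  0 < p -> sigma_finite setT mu ->
  surj_isometry mu nu p sa -> surj_isometry mu nu p sb ->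
  spatial_realization mu nu p sa Sa -> spatial_realization mu nu p sb Sb ->
  (forall f, inLp mu p f ->
     lpnorm nu p (fun y => sa f y - sb f y) <= 2^-1 * lpnorm mu p f) ->
  forall E, measurable E -> nulleq nu (Sa E) (Sb E).
Proof.
move=> p0 sf Ia Ib HSa HSb Hb E mE.
have h1 := core p0 sf Ia Ib HSa HSb Hb E mE.
have Hb' : forall f, inLp mu p f ->
     lpnorm nu p (fun y => sb f y - sa f y) <= 2^-1 * lpnorm mu p f.
  by move=> f Hf; rewrite lpnorm_sym; apply: Hb.
have h2 := core p0 sf Ib Ia HSb HSa Hb' E mE.
have mSa := sr_meas HSa; have mSb := sr_meas HSb.
have m1 : measurable (Sa E `\` Sb E) by apply: measurableD; [apply: mSa|apply: mSb].
have m2 : measurable (Sb E `\` Sa E) by apply: measurableD; [apply: mSb|apply: mSa].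
rewrite /nulleq; apply/eqP; rewrite eq_le measure_ge0 andbT.
have H := measureU2 nu m1 m2; apply: (le_trans H).
rewrite -[leRHS](adde0 0%E); apply: leeD; rewrite le_eqVlt; apply/orP; left; apply/eqP; [exact: h1|exact: h2].
Qed.

Unset Implicit Arguments.
Theorem lemma6p22 (R : realType) (d1 d2 : measure_display)
  (X : measurableType d1) (Y : measurableType d2)
  (mu : {measure set X -> \bar R}) (nu : {measure set Y -> \bar R})
  (p : R) (s : R -> (X -> Cx R) -> (Y -> Cx R)) (S : R -> set X -> set Y) :
  1 <= p -> p != 2 ->
  sigma_finite setT mu -> sigma_finite setT nu ->
  (forall l, 0 <= l <= 1 -> surj_isometry mu nu p (s l)) ->
  norm_continuous_path mu nu p s ->
  (forall l, 0 <= l <= 1 -> spatial_realization mu nu p (s l) (S l)) ->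
  forall E, measurable E -> nulleq nu (S 0 E) (S 1 E).
Proof.
move=> p1 _ sf _ Hiso Hcont HSR.
have p0 : 0 < p by lra.
have K : forall a b, 0 <= a <= 1 -> 0 <= b <= 1 ->
    (forall f, inLp mu p f ->
       lpnorm nu p (fun y => s a f y - s b f y) <= 2^-1 * lpnorm mu p f) ->
    forall E, measurable E -> nulleq nu (S a E) (S b E).
  move=> a b ha hb Hb E mE.
  exact: (stepK p0 sf (Hiso a ha) (Hiso b hb) (HSR a ha) (HSR b hb) Hb).
have h00 : 0 <= (0:R) <= 1 by rewrite lexx ler01.
have mS : forall l, 0 <= l <= 1 -> forall E, measurable E -> measurable (S l E).
  by move=> l hl; apply: sr_meas (HSR l hl).
pose A := [set t : R | 0 <= t <= 1 /\ forall E, measurable E -> nulleq nu (S 0 E) (S t E)].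
have A0 : A 0.
  split => // E mE; by rewrite /nulleq setDv setU0 measure0.
have hsA : has_sup A.
  split; first by exists 0.
  by exists 1 => t [/andP [_ ->] _].
have [c ceq] : {c | c = sup A} by exists (sup A).
have c0 : 0 <= c by rewrite ceq; apply: sup_upper_bound.
have c1 : c <= 1.
  by rewrite ceq; apply: ge_sup; [exists 0| move=> t [/andP [_ ->] _]].
have hc : 0 <= c <= 1 by rewrite c0 c1.
have [delta dpos Hd] := Hcont c hc (2^-1) ltac:(lra).
have [t [ht Pt] tlt] := sup_adherent dpos hsA.
rewrite -ceq in tlt.
have tc : t <= c by rewrite ceq; apply: sup_upper_bound.
have Pc : forall E, measurable E -> nulleq nu (S 0 E) (S c E).
  move=> E mE; apply: (nulleq_trans (mS 0 h00 E mE) (mS t ht E mE) (mS c hc E mE)).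
    exact: Pt.
  apply: nulleq_sym; [exact: mS|exact: mS|].
  apply: K => //; apply: Hd => //.
  rewrite ltr_norml; apply/andP; split; lra.
have step : forall l, 0 <= l <= 1 -> `|c - l| < delta ->
    forall E, measurable E -> nulleq nu (S 0 E) (S l E).
  move=> l hl hcl E mE.
  apply: (nulleq_trans (mS 0 h00 E mE) (mS c hc E mE) (mS l hl E mE)); first exact: Pc.
  by apply: K => //; apply: Hd.
case: (lerP 1 (c + delta / 2)) => hcd.
  apply: step; first by rewrite ler01 lexx.
  rewrite ltr_norml; apply/andP; split; lra.
exfalso.
have hl : 0 <= c + delta / 2 <= 1 by apply/andP; split; lra.
have : A (c + delta / 2).
  split => //; apply: step => //.
  rewrite ltr_norml; apply/andP; split; lra.
move/(sup_upper_bound hsA); rewrite -ceq; lra.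
Qed.
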